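(* Assume the Standing Setting below. Then for every $n\in\mathbb Z$ there exists a finite frame $\zeta_{(n,1)},\dots,\zeta_{(n,m_n)}$ for $\mathcal A_n\subseteq A_n$ such that $\sum_{j=1}^{m_n}\phi(\zeta_{(n,j)})\,\delta(\zeta_{(n,j)}^* )=0$.
   Context: Standing Setting: $A$ is a unital $C^*$-algebra with a strongly continuous action $\sigma$ of $S^1$; $A_n:=\{a:\sigma_\lambda(a)=\lambda^na\ \forall\lambda\}$, $P_0(a):=\frac1{2\pi}\int_0^{2\pi}\sigma_{e^{it}}(a)dt$. $\mathcal A\subseteq A$ is a norm-dense unital $*$-subalgebra with $P_0(\mathcal A)\subseteq\mathcal A$, generated as a $*$-algebra by $\mathcal A\cap A_1$; $\mathcal A_n:=\mathcal A\cap A_n$. $H_0$ is a separable Hilbert space, $\rho:A_0\to\mathcal B(H_0)$ an injective unital $*$-homomorphism, $D_0$ a selfadjoint operator on $H_0$ such that for every $a\in\mathcal A_0$, $\rho(a)$ preserves $\operatorname{Dom}(D_0)$ and $[D_0,\rho(a)]$ extends to a bounded operator $\delta_0(a)$. Moreover $H\supseteq H_0$ is a separable Hilbert space containing $H_0$ as a closed subspace, $\phi:A\to\mathcal B(H)$ a unital $*$-homomorphism and $\delta:\mathcal A\to\mathcal B(H)$ a linear map such that (1) $\delta(a)\xi=\delta_0(a)\xi$ and $\phi(a)\xi=\rho(a)\xi$ for $a\in\mathcal A_0$, $\xi\in H_0$; (2) there is $\mu>0$ with $\delta(ab)=\delta(a)\phi(b)+\mu^n\phi(a)\delta(b)$ whenever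 $a\in\mathcal A_n$, $b\in\mathcal A$; (3) there exist $\zeta^R_1,\dots,\zeta^R_k,\zeta^L_1,\dots,\zeta^L_m\in\mathcal A_1$ with $\sum_j\zeta_j^R(\zeta_j^R)^*=1=\sum_j(\zeta_j^L)^*\zeta_j^L$ and $\sum_j\phi(\zeta^R_j)\delta((\zeta^R_j)^* )=0=\sum_j\phi(\zeta_j^L)^*\delta(\zeta_j^L)$. A finite frame for $\mathcal A_n$ is a finite family $\zeta_1,\dots,\zeta_p\in\mathcal A_n$ with $\sum_j\zeta_j\zeta_j^*x=x$ for all $x\in\mathcal A_n$. *)

(* Defs.v *)
From HB Require Import structures.
From mathcomp Require Import all_boot all_order all_algebra.
From mathcomp Require Import all_classical all_reals all_analysis.
From mathcomp Require Import complex.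
Set Implicit Arguments. Unset Strict Implicit. Unset Printing Implicit Defensive.
Import Order.TTheory GRing.Theory Num.Theory.
Import numFieldNormedType.Exports.
Local Open Scope ring_scope.
Local Open Scope classical_set_scope.
Local Open Scope complex_scope.

Section StandingDefs.
Variable R : realType.
Local Notation C := R[i].

Definition expi (t : R) : C := cos t +i* sin t.

Definition circle : set C := [set z | `|z| = 1].

Definition is_subspace (V : lmodType C) (S : set V) : Prop :=
  S 0 /\ forall (c : C) x y, S x -> S y -> S (c *: x + y).

Definition is_linear_on (V W : lmodType C) (S : set V) (f : V -> W) : Prop :=
  forall (c : C) x y, S x -> S y -> f (c *: x + y) = c *: f x + f y.

Definition is_bounded_op_on (H : normedModType C) (S : set H) (T : H -> H) : Prop :=
  [/\ forall x, S x -> S (T x),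
      is_linear_on S T &
      (exists M : C, forall x, S x -> `|T x| <= M * `|x|) ].

Definition separable_in (H : normedModType C) (S : set H) : Prop :=
  exists D : set H, [/\ D `<=` S, countable D &
    (forall x, S x -> forall e : C, 0 < e -> exists2 d, D d & `|x - d| < e)].

Record is_cstar_algebra (A : completeNormedModType C)
    (mul : A -> A -> A) (one : A) (star : A -> A) : Prop := {
  cs_mulDl : forall (c : C) a b x, mul (c *: a + b) x = c *: mul a x + mul b x;
  cs_mulDr : forall (c : C) a b x, mul x (c *: a + b) = c *: mul x a + mul x b;
  cs_mulA : forall a b d, mul a (mul b d) = mul (mul a b) d;
  cs_mul1l : forall a, mul one a = a;
  cs_mul1r : forall a, mul a one = a;
  cs_starD : forall (c : C) a b, star (c *: a + b) = Num.conj c *: star a + star b;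
  cs_starK : forall a, star (star a) = a;
  cs_starM : forall a b, star (mul a b) = mul (star b) (star a);
  cs_norm_mul : forall a b, `|mul a b| <= `|a| * `|b|;
  cs_cstar : forall a, `|mul (star a) a| = `|a| ^+ 2 }.

Definition is_star_subalg (A : lmodType C) (mul : A -> A -> A) (one : A)
    (star : A -> A) (S : set A) : Prop :=
  [/\ S one, forall (c : C) x y, S x -> S y -> S (c *: x + y),
      (forall x y, S x -> S y -> S (mul x y)) & (forall x, S x -> S (star x))].

Definition generated_by (A : lmodType C) (mul : A -> A -> A) (one : A)
    (star : A -> A) (G S : set A) : Prop :=
  forall B, is_star_subalg mul one star B -> G `<=` B -> S `<=` B.

Record is_S1_action (A : completeNormedModType C) (mul : A -> A -> A) (one : A)
    (star : A -> A) (sigma : C -> A -> A) : Prop := {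
  act_lin : forall l, circle l -> forall (c : C) a b,
      sigma l (c *: a + b) = c *: sigma l a + sigma l b;
  act_mul : forall l, circle l -> forall a b,
      sigma l (mul a b) = mul (sigma l a) (sigma l b);
  act_star : forall l, circle l -> forall a, sigma l (star a) = star (sigma l a);
  act_one : forall l, circle l -> sigma l one = one;
  act_id : forall a, sigma 1 a = a;
  act_comp : forall l m, circle l -> circle m -> forall a,
      sigma (l * m) a = sigma l (sigma m a);
  act_cont : forall a l0, circle l0 -> forall e : C, 0 < e ->
      exists2 d : C, 0 < d & forall l, circle l -> `|l - l0| < d ->
        `|sigma l a - sigma l0 a| < e }.

Definition spec (A : lmodType C) (sigma : C -> A -> A) (n : int) : set A :=
  [set a | forall l, circle l -> sigma l a = l ^ n *: a].

(* P_0(a) = 1/(2pi) \int_0^{2pi} sigma_{e^{it}}(a) dt, as the limit of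
   the Riemann sums over uniform partitions *)
Definition P0 (A : completeNormedModType C) (sigma : C -> A -> A) (a : A) : A :=
  lim ((fun N : nat => (N.+1%:R : C)^-1 *:
          \sum_(k < N.+1) sigma (expi (2 * pi * k%:R / N.+1%:R)) a) @ \oo).

Record is_hilbert (H : completeNormedModType C) (ip : H -> H -> C) : Prop := {
  ip_linl : forall (c : C) x y z, ip (c *: x + y) z = c * ip x z + ip y z;
  ip_conj : forall x y, ip y x = Num.conj (ip x y);
  ip_norm : forall x, ip x x = `|x| ^+ 2 }.

Record is_selfadjoint_on (H : completeNormedModType C) (ip : H -> H -> C)
    (H0 Dom : set H) (D : H -> H) : Prop := {
  sa_dom_sub : Dom `<=` H0;
  sa_dom_subspace : is_subspace Dom;
  sa_maps : forall x, Dom x -> H0 (D x);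
  sa_lin : is_linear_on Dom D;
  sa_dense : H0 `<=` closure Dom;
  sa_sym : forall x y, Dom x -> Dom y -> ip (D x) y = ip x (D y);
  sa_adj : forall y, H0 y ->
      (exists2 z, H0 z & forall x, Dom x -> ip (D x) y = ip x z) -> Dom y }.

Definition is_finite_frame (A : lmodType C) (mul : A -> A -> A) (star : A -> A)
    (S : set A) (s : seq A) : Prop :=
  (forall z, z \in s -> S z) /\
  forall x, S x -> \sum_(z <- s) mul (mul z (star z)) x = x.

Record standing_setting
    (A : completeNormedModType C) (mul : A -> A -> A) (one : A) (star : A -> A)
    (sigma : C -> A -> A) (Acal : set A)
    (H : completeNormedModType C) (ip : H -> H -> C) (H0 : set H)
    (rho : A -> H -> H) (Dom : set H) (D0 : H -> H) (delta0 : A -> H -> H)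
    (phi : A -> H -> H) (delta : A -> H -> H) : Prop := {
  ss_cstar : is_cstar_algebra mul one star;
  ss_action : is_S1_action mul one star sigma;
  ss_sub : is_star_subalg mul one star Acal;
  ss_dense : closure Acal = setT;
  ss_P0 : forall a, Acal a -> Acal (P0 sigma a);
  ss_gen : generated_by mul one star (Acal `&` spec sigma 1) Acal;
  ss_hilbert : is_hilbert ip;
  ss_Hsep : separable_in (@setT H);
  ss_H0sub : is_subspace H0;
  ss_H0closed : closed H0;
  ss_H0sep : separable_in H0;
  ss_rho_bdd : forall a, spec sigma 0 a -> is_bounded_op_on H0 (rho a);
  ss_rho_one : forall x, H0 x -> rho one x = x;
  ss_rho_lin : forall (c : C) a b x, spec sigma 0 a -> spec sigma 0 b -> H0 x ->
      rho (c *: a + b) x = c *: rho a x + rho b x;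
  ss_rho_mul : forall a b x, spec sigma 0 a -> spec sigma 0 b -> H0 x ->
      rho (mul a b) x = rho a (rho b x);
  ss_rho_star : forall a x y, spec sigma 0 a -> H0 x -> H0 y ->
      ip (rho (star a) x) y = ip x (rho a y);
  ss_rho_inj : forall a b, spec sigma 0 a -> spec sigma 0 b ->
      (forall x, H0 x -> rho a x = rho b x) -> a = b;
  ss_D0 : is_selfadjoint_on ip H0 Dom D0;
  ss_comm_dom : forall a, (Acal `&` spec sigma 0) a ->
      forall x, Dom x -> Dom (rho a x);
  ss_delta0_bdd : forall a, (Acal `&` spec sigma 0) a ->
      is_bounded_op_on H0 (delta0 a);
  ss_delta0_comm : forall a, (Acal `&` spec sigma 0) a ->
      forall x, Dom x -> delta0 a x = D0 (rho a x) - rho a (D0 x);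
  ss_phi_bdd : forall a, is_bounded_op_on setT (phi a);
  ss_phi_one : forall x, phi one x = x;
  ss_phi_lin : forall (c : C) a b x, phi (c *: a + b) x = c *: phi a x + phi b x;
  ss_phi_mul : forall a b x, phi (mul a b) x = phi a (phi b x);
  ss_phi_star : forall a x y, ip (phi (star a) x) y = ip x (phi a y);
  ss_delta_bdd : forall a, Acal a -> is_bounded_op_on setT (delta a);
  ss_delta_lin : forall (c : C) a b x, Acal a -> Acal b ->
      delta (c *: a + b) x = c *: delta a x + delta b x;
  ss_cond1 : forall a x, (Acal `&` spec sigma 0) a -> H0 x ->
      delta a x = delta0 a x /\ phi a x = rho a x;
  ss_cond2 : exists2 mu : R, 0 < mu &
      forall (n : int) a b, (Acal `&` spec sigma n) a -> Acal b -> forall x,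
        delta (mul a b) x = delta a (phi b x) + (mu%:C) ^ n *: phi a (delta b x);
  (* (3); phi(zeta)^* is written phi(zeta^* ) since phi is a *-homomorphism *)
  ss_cond3 : exists zR zL : seq A,
      [/\ (forall z, z \in zR -> (Acal `&` spec sigma 1) z),
          \sum_(z <- zR) mul z (star z) = one &
          (forall x, \sum_(z <- zR) phi z (delta (star z) x) = 0)] /\
      [/\ (forall z, z \in zL -> (Acal `&` spec sigma 1) z),
          \sum_(z <- zL) mul (star z) z = one &
          (forall x, \sum_(z <- zL) phi (star z) (delta z x) = 0)] }.

End StandingDefs.

(* Main.v *)
Require Import Defs.
From HB Require Import structures.
From mathcomp Require Import all_boot all_order all_algebra.
From mathcomp Require Import all_classical all_reals all_analysis.
From mathcomp Require Import complex.
Import Order.TTheory GRing.Theory Num.Theory.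
Import numFieldNormedType.Exports.
Local Open Scope ring_scope.
Local Open Scope classical_set_scope.
Local Open Scope complex_scope.

Theorem lemma7p6 (R : realType)
    (A : completeNormedModType R[i]) (mul : A -> A -> A) (one : A) (star : A -> A)
    (sigma : R[i] -> A -> A) (Acal : set A)
    (H : completeNormedModType R[i]) (ip : H -> H -> R[i]) (H0 : set H)
    (rho : A -> H -> H) (Dom : set H) (D0 : H -> H) (delta0 : A -> H -> H)
    (phi : A -> H -> H) (delta : A -> H -> H)
    (hS : standing_setting mul one star sigma Acal ip H0 rho Dom D0 delta0 phi delta) :
  forall n : int, exists s : seq A,
    is_finite_frame mul star (Acal `&` spec sigma n) s /\
    forall x : H, \sum_(z <- s) phi z (delta (star z) x) = 0.
Proof.
have Hcs := ss_cstar hS; have Hact := ss_action hS.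
have [_ _ HAmul HAstar] := ss_sub hS.
have [mu mu0 Hleib] := ss_cond2 hS.
have [zR [zL [[zRin zRsum zRd] [zLin zLsum zLd]]]] := ss_cond3 hS.
have mul0l : forall x, mul 0 x = 0.
  move=> x; have h := cs_mulDl Hcs 1 0 0 x; rewrite !scale1r addr0 in h.
  by apply: (addrI (mul 0 x)); rewrite addr0 -h.
have mul0r : forall x, mul x 0 = 0.
  move=> x; have h := cs_mulDr Hcs 1 0 0 x; rewrite !scale1r addr0 in h.
  by apply: (addrI (mul x 0)); rewrite addr0 -h.
have mulZl : forall c a x, mul (c *: a) x = c *: mul a x.
  by move=> c a x; have := cs_mulDl Hcs c a 0 x; rewrite !addr0 mul0l addr0.
have mulZr : forall c a x, mul x (c *: a) = c *: mul x a.
  by move=> c a x; have := cs_mulDr Hcs c a 0 x; rewrite !addr0 mul0r addr0.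
have mul_suml : forall (s : seq A) (F : A -> A) x,
    mul (\sum_(w <- s) F w) x = \sum_(w <- s) mul (F w) x.
  move=> s F x; elim: s => [|w s IH]; first by rewrite !big_nil mul0l.
  by rewrite !big_cons -IH -[F w]scale1r (cs_mulDl Hcs) !scale1r.
have mul_sumr : forall (s : seq A) (F : A -> A) x,
    mul x (\sum_(w <- s) F w) = \sum_(w <- s) mul x (F w).
  move=> s F x; elim: s => [|w s IH]; first by rewrite !big_nil mul0r.
  by rewrite !big_cons -IH -[F w]scale1r (cs_mulDr Hcs) !scale1r.
have star0 : star 0 = 0.
  have h := cs_starD Hcs 1 0 0; rewrite conjC1 !scale1r addr0 in h.
  by apply: (addrI (star 0)); rewrite addr0 -h.
have starZ : forall c a, star (c *: a) = Num.conj c *: star a.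
  by move=> c a; have := cs_starD Hcs c a 0; rewrite !addr0 star0 addr0.
have phi0 : forall y, phi 0 y = 0.
  move=> y; have h := ss_phi_lin hS 1 0 0 y; rewrite !scale1r addr0 in h.
  by apply: (addrI (phi 0 y)); rewrite addr0 -h.
have phi_sum : forall (s : seq A) (F : A -> A) y,
    phi (\sum_(w <- s) F w) y = \sum_(w <- s) phi (F w) y.
  move=> s F y; elim: s => [|w s IH]; first by rewrite !big_nil phi0.
  by rewrite !big_cons -IH -[F w]scale1r (ss_phi_lin hS) !scale1r.
have phiL : forall a c x y, phi a (c *: x + y) = c *: phi a x + phi a y.
  move=> a c x y; have [_ hl _] := ss_phi_bdd hS a; exact: hl.
have phiaD : forall a x y, phi a (x + y) = phi a x + phi a y.
  by move=> a x y; rewrite -[x]scale1r phiL !scale1r.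
have phia0 : forall a, phi a 0 = 0.
  move=> a; have h := phiL a 1 0 0; rewrite !scale1r addr0 in h.
  by apply: (addrI (phi a 0)); rewrite addr0 -h.
have phiaZ : forall a c x, phi a (c *: x) = c *: phi a x.
  by move=> a c x; have := phiL a c x 0; rewrite !addr0 phia0 addr0.
have phia_sum : forall a (s : seq A) (F : A -> H),
    phi a (\sum_(w <- s) F w) = \sum_(w <- s) phi a (F w).
  move=> a s F; elim: s => [|w s IH]; first by rewrite !big_nil phia0.
  by rewrite !big_cons -IH -[F w]scale1r phiL !scale1r.
have circ0 : forall l : R[i], circle l -> l != 0.
  move=> l hl; apply/eqP => l0; move: hl; rewrite /circle /= l0 normr0 => /eqP.
  by rewrite eq_sym oner_eq0.
have specM : forall n k a b, spec sigma n a -> spec sigma k b ->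
    spec sigma (n + k) (mul a b).
  move=> n k a b ha hb l hl.
  by rewrite (act_mul Hact) // ha // hb // mulZl mulZr scalerA expfzDr ?circ0.
have specS : forall a, spec sigma 1 a -> spec sigma (-1) (star a).
  move=> a ha l hl; rewrite (act_star Hact) // ha // expr1z starZ exprN1.
  by rewrite invC_norm hl expr1n invr1 mul1r.

pose goodP (s : seq A) (n : int) :=
  [/\ (forall w, w \in s -> Acal w /\ spec sigma n w),
      \sum_(w <- s) mul w (star w) = one &
      forall x, \sum_(w <- s) phi w (delta (star w) x) = 0].
have prodP : forall s n (t : seq A) k, goodP s n ->
    (forall u, u \in t -> [/\ Acal u, spec sigma k u, Acal (star u) &
                            spec sigma (-k) (star u)]) ->
    \sum_(u <- t) mul u (star u) = one ->
    (forall x, \sum_(u <- t) phi u (delta (star u) x) = 0) ->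
    goodP [seq mul w u | w <- s, u <- t] (n + k).
  move=> s n t k [sin ssum sd] tin tsum td; split.
  - move=> z /allpairsP [[w u] [/= ws ut ->]].
    have [Aw sw] := sin w ws; have [Au su _ _] := tin u ut.
    by split; [exact: HAmul | exact: specM].
  - rewrite big_allpairs_dep /=.
    have e : forall w u, mul (mul w u) (star (mul w u)) =
                         mul w (mul (mul u (star u)) (star w)).
      by move=> w u; rewrite (cs_starM Hcs) !(cs_mulA Hcs).
    under eq_bigr => w _ do under eq_bigr => u _ do rewrite e.
    under eq_bigr => w _ do rewrite -mul_sumr -mul_suml tsum (cs_mul1l Hcs).
    exact: ssum.
  - move=> x; rewrite big_allpairs_dep /=.
    have e : forall w u, w \in s -> u \in t ->
      phi (mul w u) (delta (star (mul w u)) x) =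
      phi w (phi u (delta (star u) (phi (star w) x))) +
      (mu%:C) ^ (-k) *: phi w (phi u (phi (star u) (delta (star w) x))).
      move=> w u ws ut; have [Aw _] := sin w ws; have [_ _ Asu ssu] := tin u ut.
      rewrite (cs_starM Hcs) (Hleib (-k)) //; last by apply: HAstar.
      by rewrite (ss_phi_mul hS) !phiaD !phiaZ.
    have inner : forall w, w \in s ->
        \sum_(u <- t) phi (mul w u) (delta (star (mul w u)) x) =
        (mu%:C) ^ (-k) *: phi w (delta (star w) x).
      move=> w ws; rewrite (eq_big_seq _ (fun u ut => e w u ws ut)).
      rewrite big_split /= -phia_sum -scaler_sumr -phia_sum td phia0 add0r.
      under eq_bigr => u _ do rewrite -(ss_phi_mul hS).
      by rewrite -phi_sum tsum (ss_phi_one hS).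
    by rewrite (eq_big_seq _ inner) -scaler_sumr sd scaler0.
have gR : goodP zR 1.
  split => //; by move=> w /zRin [].
have tR : forall u, u \in zR ->
    [/\ Acal u, spec sigma 1 u, Acal (star u) & spec sigma (-1) (star u)].
  by move=> u /zRin [Au su]; split => //; [exact: HAstar | exact: specS].
have gL : goodP (map star zL) (-1).
  split.
  - by move=> w /mapP [z /zLin [Az sz] ->]; split; [exact: HAstar | exact: specS].
  - rewrite big_map; under eq_bigr => z _ do rewrite (cs_starK Hcs).
    exact: zLsum.
  - move=> x; rewrite big_map; under eq_bigr => z _ do rewrite (cs_starK Hcs).
    exact: zLd.
have tL : forall u, u \in map star zL ->
    [/\ Acal u, spec sigma (-1) u, Acal (star u) & spec sigma (- -1) (star u)].
  move=> u /mapP [z /zLin [Az sz] ->]; rewrite (cs_starK Hcs) opprK.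
  by split => //; [exact: HAstar | exact: specS].
have [_ gLs gLd] := gL.
have fin : forall s n, goodP s n -> exists s, 
    is_finite_frame mul star (Acal `&` spec sigma n) s /\
    forall x : H, \sum_(z <- s) phi z (delta (star z) x) = 0.
  move=> s n [sin ssum sd]; exists s; split => //; split.
  - by move=> z /sin.
  - by move=> x _; rewrite -mul_suml ssum (cs_mul1l Hcs).
case=> [[|m]|m].
- have h := prodP _ _ _ _ gR tL gLs gLd; rewrite addrN in h.
  exact: fin _ _ h.
- suff [s hs] : exists s, goodP s m.+1%:Z by exact: fin _ _ hs.
  elim: m => [|m [s hs]]; first by exists zR.
  exists [seq mul w u | w <- s, u <- zR].
  have -> : m.+2%:Z = m.+1%:Z + 1 by rewrite [LHS]intS addrC.
  exact: prodP _ _ _ _ hs tR zRsum zRd.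
- rewrite NegzE.
  suff [s hs] : exists s, goodP s (- m.+1%:Z) by exact: fin _ _ hs.
  elim: m => [|m [s hs]]; first by exists (map star zL).
  exists [seq mul w u | w <- s, u <- map star zL].
  have -> : - m.+2%:Z = - m.+1%:Z + -1 by rewrite -opprD; congr (- _); rewrite [LHS]intS addrC.
  exact: prodP _ _ _ _ hs tL gLs gLd.
Qed.
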